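(* For every $n\in\mathbb{N}$, let $$\Omega_n=\{x\in(0,1)\setminus\mathbb{Q}:\ g_k(x)\in\{1,2,\dots,n\}\ \text{for all } k\in\mathbb{N}\},$$ where $g_k(x)$ denotes the $k$-th symbol of $x$ in its $\bar O^1$-expansion. Then the Hausdorff dimension of $\Omega_n$ is $\dim_H(\Omega_n)=0$ for every $n\in\mathbb{N}$.
   Context: Every irrational $x\in(0,1)$ has a unique representation ($\bar O^1$-expansion, the difference form of the Ostrogradsky–Sierpiński–Pierce expansion) $$x=\sum_{k=1}^\infty\frac{(-1)^{k-1}}{g_1(g_1+g_2)\cdots(g_1+g_2+\dots+g_k)},\qquad g_k=g_k(x)\in\mathbb{N}=\{1,2,3,\dots\},$$ and conversely every infinite sequence of positive integers $(g_k)$ gives an irrational number in $(0,1)$ via this series. The numbers $g_k(x)$ are called the $\bar O^1$-symbols of $x$. *)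

(* Defs.v *)
From HB Require Import structures.
From mathcomp Require Import all_boot all_order all_algebra.
From mathcomp Require Import all_classical all_reals all_analysis.
Set Implicit Arguments. Unset Strict Implicit. Unset Printing Implicit Defensive.
Import Order.TTheory GRing.Theory Num.Theory.
Import numFieldNormedType.Exports.
Local Open Scope classical_set_scope.
Local Open Scope ring_scope.

Section Defs.
Variable R : realType.

(* A sequence of symbols g is 0-indexed: g 0 = g_1, g 1 = g_2, ...        *)
Definition Obar_den (g : nat -> nat) (k : nat) : nat :=
  \prod_(i < k.+1) (\sum_(j < i.+1) g j).

Definition Obar_term (g : nat -> nat) (k : nat) : R :=
  (-1) ^+ k / (Obar_den g k)%:R.

Definition is_Obar_expansion (x : R) (g : nat -> nat) : Prop :=
  (forall k, (0 < g k)%N) /\ series (Obar_term g) @ \oo --> x.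

(* The O-bar^1 symbols of x (well defined, by existence and uniqueness of
   the expansion, for irrational x in (0,1)); g_k(x) = Obar_symbols x (k-1). *)
Definition Obar_symbols (x : R) : nat -> nat :=
  get [set g | is_Obar_expansion x g].

Definition irrational (x : R) : Prop := ~ exists q : rat, x = ratr q.

Definition Omega (n : nat) : set R :=
  [set x | 0 < x < 1 /\ irrational x /\
           forall k, (1 <= Obar_symbols x k <= n)%N].

Local Open Scope ereal_scope.

(* diameter, with the convention diam(empty) = 0 *)
Definition diam (A : set R) : \bar R :=
  ereal_sup ([set 0] `|` [set (`|x - y|%R)%:E | x in A & y in A]).

Definition diam_pow (s : R) (A : set R) : \bar R :=
  if asbool (A = set0) then 0
  else if diam A is r%:E then (r `^ s)%:E else +oo.

Definition delta_cover (delta : R) (E : set R) (U : nat -> set R) : Prop :=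
  E `<=` \bigcup_i U i /\ forall i, diam (U i) <= delta%:E.

Definition hausdorff_content (s delta : R) (E : set R) : \bar R :=
  ereal_inf [set \sum_(0 <= i <oo) diam_pow s (U i) | U in delta_cover delta E].

(* H^s = lim_{delta -> 0+} H^s_delta = sup_{delta > 0} H^s_delta *)
Definition hausdorff_measure (s : R) (E : set R) : \bar R :=
  ereal_sup [set hausdorff_content s delta E | delta in [set d : R | (0 < d)%R]].

Definition hausdorff_dim (E : set R) : \bar R :=
  ereal_inf [set s%:E | s in [set s : R | (0 <= s)%R /\ hausdorff_measure s E = 0]].

End Defs.

(* Main.v *)
Require Import Defs.
From HB Require Import structures.
From mathcomp Require Import all_boot all_order all_algebra.
From mathcomp Require Import all_classical all_reals all_analysis.
From mathcomp Require Import zify ring lra.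
Import Order.TTheory GRing.Theory Num.Theory.
Local Open Scope classical_set_scope.
Local Open Scope ring_scope.

Lemma S_ge (g : nat -> nat) i : (forall j, (0 < g j)%N) ->
  (i.+1 <= \sum_(j < i.+1) g j)%N.
Proof.
move=> gp; rewrite -[X in (X <= _)%N]card_ord -sum1_card.
by apply: leq_sum => j _; apply: gp.
Qed.

Lemma den_ge (g : nat -> nat) k : (forall j, (0 < g j)%N) ->
  ((k.+1)`! <= Obar_den g k)%N.
Proof.
move=> gp; elim: k => [|k IH].
  by rewrite /Obar_den big_ord_recr big_ord0 /= mul1n (leq_trans _ (S_ge g 0 gp)).
rewrite /Obar_den big_ord_recr /= -/(Obar_den g k) factS mulnC.
by apply: leq_mul => //; apply: S_ge.
Qed.

Lemma fact_geo k i : (k`! * 2 ^ i <= (k + i).+1`!)%N.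
Proof.
elim: i => [|i IH].
  by rewrite expn0 muln1 addn0 factS leq_pmull.
rewrite addnS factS expnS mulnCA.
apply: leq_mul => //; lia.
Qed.

Lemma exists_k B C : exists k, (B * C ^ k <= k`!)%N.
Proof.
case: C => [|C]; first by exists 1%N; rewrite expn1 muln0.
set c := C.+1.
have Q : forall j, (2 ^ j * c ^ (2 * c + j) <= (2 * c + j)`! * c ^ (2 * c))%N.
  elim=> [|j IH].
    by rewrite expn0 mul1n addn0 leq_pmull // fact_gt0.
  rewrite addnS factS expnS (expnS c).
  move: IH; set X := (2 ^ j)%N; set Y := (c ^ _)%N; set F := (_`!)%N; set Z := (c ^ _)%N => IH.
  have h1 : (2 * c <= (2 * c + j).+1)%N by lia.
  have := leq_mul h1 IH. nia.
set j := (B * c ^ (2 * c))%N.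
exists (2 * c + j)%N.
have hc : (0 < c ^ (2 * c))%N by rewrite expn_gt0.
rewrite -(leq_pmul2r hc).
apply: leq_trans (Q j).
have hj : (j <= 2 ^ j)%N by rewrite ltnW // ltn_expl.
move: hj; rewrite /j; set P := (c ^ (2 * c + _))%N; set Z := (c ^ (2 * c))%N.
move=> hj; nia.
Qed.


Section B.
Variable R : realType.

Lemma term_norm (g : nat -> nat) j :
  `|@Obar_term R g j| = ((Obar_den g j)%:R)^-1.
Proof.
by rewrite /Obar_term normrM normrX normrN1 expr1n mul1r normfV normr_nat.
Qed.

Lemma tail (g : nat -> nat) (gp : forall j, (0 < g j)%N) k N :
  `|series (@Obar_term R g) (k + N)%N - series (@Obar_term R g) k|
    <= (2 - 2 / 2 ^+ N) / (k`!)%:R.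
Proof.
have K0 : 0 < (k`!)%:R :> R by rewrite ltr0n fact_gt0.
elim: N => [|N IH].
  by rewrite addn0 subrr normr0 expr0 divr1 subrr mul0r.
rewrite addnS seriesSr addrAC.
apply: le_trans (ler_normD _ _) _.
have ht : `|@Obar_term R g (k + N)%N| <= ((k`!)%:R * 2 ^+ N)^-1.
  have d0 : (0 < Obar_den g (k + N)%N)%N.
    exact: (leq_trans (fact_gt0 _) (den_ge g (k + N)%N gp)).
  rewrite term_norm lef_pV2 ?posrE ?mulr_gt0 ?exprn_gt0 ?ltr0n //.
  rewrite -natrX -natrM ler_nat.
  exact: leq_trans (fact_geo k N) (den_ge g (k + N)%N gp).
  exact: fact_gt0.
apply: le_trans (lerD IH ht) _.
rewrite le_eqVlt; apply/orP; left; apply/eqP.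
have W0 : 0 < 2 ^+ N :> R by rewrite exprn_gt0.
rewrite exprS; field.
by apply/andP; split; rewrite gt_eqF.
Qed.

Lemma lim_bound (x : R) (g : nat -> nat) k : is_Obar_expansion x g ->
  `|x - series (@Obar_term R g) k| <= 2 / (k`!)%:R.
Proof.
move=> [gp cv].
have K0 : 0 < (k`!)%:R :> R by rewrite ltr0n fact_gt0.
set P := series _ k; set T := 2 / _.
have ev : \forall m \near \oo, `|series (@Obar_term R g) m - P| <= T.
  exists k => // m /= km.
  rewrite -(subnKC km); apply: le_trans (@tail g gp k (m - k)) _.
  rewrite ler_pM2r ?invr_gt0 // lerBlDr lerDl.
  by rewrite divr_ge0 // exprn_ge0.
have h1 : x <= P + T.
  apply: (closed_cvg _ (@closed_le _ (P + T)) _ x cv).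
  move: ev; apply: filterS => m /=; rewrite ler_norml => /andP[_].
  move=> h; lra.
have h2 : P - T <= x.
  apply: (closed_cvg _ (@closed_ge _ (P - T)) _ x cv).
  move: ev; apply: filterS => m /=; rewrite ler_norml => /andP[+ _].
  move=> h; lra.
by rewrite ler_norml; apply/andP; split; lra.
Qed.

Lemma series_prefix (g h : nat -> nat) k :
  (forall j, (j < k)%N -> g j = h j) ->
  series (@Obar_term R g) k = series (@Obar_term R h) k.
Proof.
move=> gh; rewrite !seriesEnat /=.
apply: eq_big_nat => j /andP[_ jk].
rewrite /Obar_term /Obar_den; congr (_ / _%:R).
apply: eq_bigr => i _; apply: eq_bigr => l _; apply: gh.
have := ltn_ord l; have := ltn_ord i; lia.
Qed.

End B.


Section C.
Variable R : realType.

Lemma diam_le (A : set R) (D : R) : 0 <= D ->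
  (forall x y, A x -> A y -> `|x - y| <= D) -> (diam A <= D%:E)%E.
Proof.
move=> D0 hA; apply: ge_ereal_sup => z [->|[x Ax [y Ay <-]]].
  by rewrite lee_fin.
by rewrite lee_fin; apply: hA.
Qed.

Lemma diam_ge0 (A : set R) : (0 <= diam A)%E.
Proof. by apply: le_ereal_sup_tmp; exists 0%E => //; left. Qed.

Lemma diam_pow_le (s : R) (A : set R) (D : R) : 0 <= s -> 0 <= D ->
  (forall x y, A x -> A y -> `|x - y| <= D) -> (diam_pow s A <= (D `^ s)%:E)%E.
Proof.
move=> s0 D0 hA; rewrite /diam_pow.
case: ifP => _; first by rewrite lee_fin powR_ge0.
have := @diam_le A D D0 hA; have := diam_ge0 A.
case: (diam A) => [r| |] //= r0 rD.
rewrite lee_fin; apply: ge0_ler_powR => //; rewrite ?nnegrE -?lee_fin //.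
Qed.

Lemma diam_pow_set0 s : diam_pow s (@set0 R) = 0%E.
Proof. by rewrite /diam_pow asboolT. Qed.

End C.


Section D.
Variable R : realType.
Variables m k : nat.

Definition cyl (f : {ffun 'I_k -> 'I_m.+1}) : set R :=
  [set x | exists g, is_Obar_expansion x g /\ forall j : 'I_k, g j = (f j).+1].

Definition Ucov (i : nat) : set R :=
  nth set0 [seq cyl f | f <- enum {ffun 'I_k -> 'I_m.+1}] i.

Lemma cyl_diam f x y : cyl f x -> cyl f y -> `|x - y| <= 4 / (k`!)%:R.
Proof.
move=> [g [ex hg]] [h [ey hh]].
have a := @lim_bound R x g k ex; have b := @lim_bound R y h k ey.
rewrite -(@series_prefix R g h k) in b; last first.
  by move=> j jk; rewrite (hg (Ordinal jk)) (hh (Ordinal jk)).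
move: a b; rewrite !ler_norml => /andP[a1 a2] /andP[b1 b2].
apply/andP; split; lra.
Qed.

Lemma Ucov_diam i x y : Ucov i x -> Ucov i y -> `|x - y| <= 4 / (k`!)%:R.
Proof.
rewrite /Ucov; case: (ltnP i (size (enum {ffun 'I_k -> 'I_m.+1}))) => hi.
  rewrite (nth_map [ffun=> ord0]) //; exact: cyl_diam.
by rewrite nth_default // size_map.
Qed.

Lemma Ucov_cover : @Omega R m.+1 `<=` \bigcup_i Ucov i.
Proof.
move=> x [x01 [irr hb]].
set g := Obar_symbols x in hb.
have ex : is_Obar_expansion x g.
  case: (pselect (exists g, is_Obar_expansion x g)) => [e|ne].
    exact: getPex e.
  exfalso; move: (hb 0%N); rewrite /g /Obar_symbols getPN //.
  by move=> h hh; apply: ne; exists h.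
set f : {ffun 'I_k -> 'I_m.+1} := [ffun j : 'I_k => inord (g j).-1].
exists (index f (enum {ffun 'I_k -> 'I_m.+1})) => //.
rewrite /Ucov (nth_map [ffun=> ord0]); last by rewrite index_mem mem_enum.
rewrite nth_index ?mem_enum //.
exists g; split => // j; rewrite ffunE inordK; have := hb j; lia.
Qed.

Lemma Ucov_sum (s : R) : 0 <= s ->
  (\sum_(0 <= i <oo) diam_pow s (Ucov i) <=
   (((m.+1 ^ k)%N)%:R * (4 / (k`!)%:R) `^ s)%:E)%E.
Proof.
move=> s0.
have K0 : 0 < (k`!)%:R :> R by rewrite ltr0n fact_gt0.
set N := size [seq cyl f | f <- enum {ffun 'I_k -> 'I_m.+1}].
have hN : N = (m.+1 ^ k)%N by rewrite /N size_map -cardE card_ffun !card_ord.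
have U0 : forall i, (N <= i)%N -> Ucov i = set0.
  by move=> i hi; rewrite /Ucov nth_default.
have -> : (\sum_(0 <= i <oo) diam_pow s (Ucov i) =
           \sum_(0 <= i < N) diam_pow s (Ucov i))%E.
  apply: lim_near_cst => //; exists N => // M /= NM.
  rewrite (@big_cat_nat _ _ _ N 0 M _ _ (leq0n N) NM) /=.
  rewrite [X in (_ + X)%E](_ : _ = 0%E) ?adde0 //.
  rewrite big_nat_cond big1 // => i.
  by move=> /andP[/andP[Ni _] _]; rewrite U0 // diam_pow_set0.
apply: (@le_trans _ _ (\sum_(0 <= i < N) ((4 / (k`!)%:R) `^ s)%:E)%E).
  apply: lee_sum => i _; apply: diam_pow_le => //.
  exact: Ucov_diam.
by rewrite sumEFin sumr_const_nat subn0 -hN lee_fin [X in _ <= X]mulr_natl.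
Qed.

End D.


Section E.
Variable R : realType.

Lemma powRK (s x : R) : 0 < s -> 0 <= x -> (x `^ s^-1) `^ s = x.
Proof. by move=> s0 x0; rewrite -powRrM mulVf ?gt_eqF // powRr1. Qed.

Lemma choose_k (m : nat) (s delta eps : R) : 0 < s -> 0 < delta -> 0 < eps ->
  exists k, 4 / (k`!)%:R <= delta /\
            ((m.+1 ^ k)%N)%:R * (4 / (k`!)%:R) `^ s <= eps.
Proof.
move=> s0 d0 e0.
set e' := eps `^ s^-1.
have e'0 : 0 < e' by rewrite powR_gt0.
set a := (m.+1)%:R `^ s^-1 : R.
have a0 : 0 <= a by rewrite powR_ge0.
set C := (Num.Def.trunc a).+1.
have aC : a < C%:R by rewrite truncnS_gt.
set B := (Num.Def.trunc (4 / e' + 4 / delta)).+1.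
have hB : 4 / e' + 4 / delta < B%:R by rewrite truncnS_gt.
have [k hk] := exists_k B C.
exists k.
have K0 : 0 < (k`!)%:R :> R by rewrite ltr0n fact_gt0.
have hK : B%:R * C%:R ^+ k <= (k`!)%:R :> R by rewrite -natrX -natrM ler_nat.
have C1 : 1 <= C%:R ^+ k :> R by rewrite exprn_ege1 // ler1n.
have B0 : 0 <= B%:R :> R by [].
have hBd : 4 < B%:R * delta.
  have : 4 / delta < B%:R.
    apply: le_lt_trans hB; rewrite lerDr divr_ge0 //; exact: ltW.
  by rewrite ltr_pdivrMr.
have hBe : 4 < B%:R * e'.
  have : 4 / e' < B%:R.
    apply: le_lt_trans hB; rewrite lerDl divr_ge0 //; exact: ltW.
  by rewrite ltr_pdivrMr.
have akC : a ^+ k <= C%:R ^+ k by rewrite lerXn2r // ?nnegrE // ltW.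
have ak0 : 0 <= a ^+ k by rewrite exprn_ge0.
set K := (k`!)%:R in K0 hK *.
set P := C%:R ^+ k in hK C1 akC.
set A := a ^+ k in akC ak0 *.
split.
  rewrite ler_pdivrMr //.
  have KB : B%:R <= K by apply: le_trans hK; rewrite ler_peMr.
  nra.
have hD : 4 / K * A <= e'.
  rewrite mulrAC ler_pdivrMr //.
  nra.
have D0 : 0 <= 4 / K by rewrite divr_ge0 // ltW.
have h1 : (4 / K * A) `^ s <= eps.
  have m1 : 4 / K * A \in Num.nneg by rewrite nnegrE mulr_ge0.
  have m2 : e' \in Num.nneg by rewrite nnegrE ltW.
  have := ge0_ler_powR (ltW s0) m1 m2 hD.
  by rewrite /e' powRK // ltW.
have h2 : (4 / K * A) `^ s = (4 / K) `^ s * ((m.+1 ^ k)%N)%:R.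
  rewrite powRM // /A -(powR_mulrn k a0) powRAC powR_mulrn ?powR_ge0 //.
  by rewrite /a powRK // natrX.
by rewrite mulrC -h2.
Qed.

Lemma diam_pow_ge0 (s : R) (U : set R) : (0 <= diam_pow s U)%E.
Proof.
rewrite /diam_pow; case: ifP => _ //.
by case: (diam U) => [r| |] //; rewrite lee_fin powR_ge0.
Qed.

Lemma content0 (m : nat) (s delta : R) : 0 < s -> 0 < delta ->
  hausdorff_content s delta (@Omega R m.+1) = 0%E.
Proof.
move=> s0 d0; apply/eqP; rewrite eq_le; apply/andP; split; last first.
  apply: le_ereal_inf_tmp => z [U _ <-].
  by apply: nneseries_ge0 => i _ _; apply: diam_pow_ge0.
apply/lee_addgt0Pr => eps e0; rewrite add0e.
have [k [hd hs]] := @choose_k m s delta eps s0 d0 e0.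
apply: ge_ereal_inf.
exists (\sum_(0 <= i <oo) diam_pow s (Ucov R m k i))%E.
  exists (Ucov R m k) => //; split; first exact: Ucov_cover.
  move=> i.
  have D0 : 0 <= 4 / (k`!)%:R :> R by rewrite divr_ge0 // ltW // ltr0n fact_gt0.
  apply: le_trans (@diam_le R _ _ D0 (@Ucov_diam R m k i)) _.
  by rewrite lee_fin.
apply: le_trans (@Ucov_sum R m k s (ltW s0)) _.
by rewrite lee_fin.
Qed.

End E.

Local Close Scope classical_set_scope.

Theorem theorem3 (R : realType) (n : nat) (hn : (1 <= n)%N) :
  hausdorff_dim (@Omega R n) = 0%E.
Proof.
case: n hn => [//|m] _.
have H0 : forall s : R, 0 < s -> hausdorff_measure s (@Omega R m.+1) = 0%E.
  move=> s s0; apply/eqP; rewrite eq_le; apply/andP; split.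
    by apply: ge_ereal_sup => z [d d0 <-]; rewrite content0.
  apply: le_ereal_sup_tmp; exists 0%E => //; exists 1; first by rewrite /= ltr01.
  by rewrite content0.
rewrite /hausdorff_dim; apply/eqP; rewrite eq_le; apply/andP; split.
  apply/lee_addgt0Pr => e e0; rewrite add0e.
  apply: ge_ereal_inf; exists e%:E => //.
  by exists e => //; split; [exact: ltW | exact: H0].
by apply: le_ereal_inf_tmp => z [s [s0 _] <-]; rewrite lee_fin.
Qed.
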